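(* Let $\phi_1,\ldots,\phi_N\in\mathbb{R}^D$, $\Phi=(\phi_1,\ldots,\phi_N)\in\mathbb{R}^{D\times N}$, $t\in\{0,1\}^N$, $\sigma(a)=1/(1+e^{-a})$, $y(\theta)=(\sigma(\theta^{\rm T}\phi_n))_{n=1}^N$, and $\Psi_{\rm data}(\theta)=-\sum_{n=1}^N\{t_n\ln y_n(\theta)+(1-t_n)\ln(1-y_n(\theta))\}$. For an ensemble $\theta^{(1)},\ldots,\theta^{(M)}\in\mathbb{R}^D$ let $\hat m=\frac1M\sum_j\theta^{(j)}$, $\hat\Sigma=\frac1{M-1}\sum_j(\theta^{(j)}-\hat m)(\theta^{(j)}-\hat m)^{\rm T}$, and $$\Psi_{\rm KBF}(\theta^{(1)},\ldots,\theta^{(M)})=\frac12\sum_{j=1}^M\Psi_{\rm data}(\theta^{(j)})+\frac M2\Psi_{\rm data}\Big(\frac1M\sum_{j=1}^M\theta^{(j)}\Big).$$ Then the EnKBF equations $$\frac{\rm d}{{\rm d}\tau}\theta^{(i)}_\tau=-\frac12\hat\Sigma_\tau\Phi\big(y(\theta^{(i)}_\tau)+y(\hat m_\tau)-2t\big),\qquad i=1,\ldots,M,$$ have the gradient structure $$\frac{\rm d}{{\rm d}\tau}\theta^{(i)}_\tau=-\hat\Sigma_\tau\nabla_{\theta^{(i)}}\Psi_{\rm KBF}(\theta^{(1)}_\tau,\ldots,\theta^{(M)}_\tau),\qquad i=1,\ldots,M,$$ where $\nabla_{\theta^{(i)}}$ denotes the gradient with respect to the $i$-th argument (the mean $\hat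 m$ inside $\Psi_{\rm KBF}$ being regarded as a function of the ensemble). *)

(* Defs.v *)
From HB Require Import structures.
From mathcomp Require Import all_boot all_order all_algebra.
From mathcomp Require Import all_classical all_reals all_analysis.
Set Implicit Arguments. Unset Strict Implicit. Unset Printing Implicit Defensive.
Import Order.TTheory GRing.Theory Num.Theory.
Import numFieldNormedType.Exports.
Local Open Scope ring_scope.

Section Defs.
Variables (R : realType) (D N M : nat).

Definition sigmoid (a : R) : R := 1 / (1 + expR (- a)).

Definition yvec (Phi : 'M[R]_(D, N)) (th : 'cV[R]_D) : 'cV[R]_N :=
  \col_n sigmoid ((th^T *m col n Phi) 0 0).

Definition Psi_data (Phi : 'M[R]_(D, N)) (t : 'cV[R]_N) (th : 'cV[R]_D) : R :=
  - \sum_(n < N) (t n 0 * ln (yvec Phi th n 0)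
                  + (1 - t n 0) * ln (1 - yvec Phi th n 0)).

Definition ens_mean (ens : 'I_M -> 'cV[R]_D) : 'cV[R]_D :=
  (M%:R)^-1 *: \sum_(j < M) ens j.

Definition ens_cov (ens : 'I_M -> 'cV[R]_D) : 'M[R]_D :=
  ((M%:R - 1)^-1) *: \sum_(j < M) ((ens j - ens_mean ens) *m (ens j - ens_mean ens)^T).

Definition Psi_KBF (Phi : 'M[R]_(D, N)) (t : 'cV[R]_N) (ens : 'I_M -> 'cV[R]_D) : R :=
  2^-1 * \sum_(j < M) Psi_data Phi t (ens j)
  + (M%:R / 2) * Psi_data Phi t ((M%:R)^-1 *: \sum_(j < M) ens j).

Definition EnKBF_rhs (Phi : 'M[R]_(D, N)) (t : 'cV[R]_N) (ens : 'I_M -> 'cV[R]_D)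
  (i : 'I_M) : 'cV[R]_D :=
  - (2^-1) *: (ens_cov ens *m Phi *m
       (yvec Phi (ens i) + yvec Phi (ens_mean ens) - 2 *: t)).

Definition ens_upd (ens : 'I_M -> 'cV[R]_D) (i : 'I_M) (th : 'cV[R]_D) : 'I_M -> 'cV[R]_D :=
  fun j => if j == i then th else ens j.

Definition partial_fun (f : 'cV[R]_D -> R) (x : 'cV[R]_D) (d : 'I_D) : R -> R :=
  fun s => f (x + s *: delta_mx d 0).

Definition grad (f : 'cV[R]_D -> R) (x : 'cV[R]_D) : 'cV[R]_D :=
  \col_d derive1 (partial_fun f x d) 0.

End Defs.

(* Main.v *)
Require Import Defs.
From HB Require Import structures.
From mathcomp Require Import all_boot all_order all_algebra.
From mathcomp Require Import all_classical all_reals all_analysis.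
From mathcomp Require Import ring lra.
Import Order.TTheory GRing.Theory Num.Theory.
Import numFieldNormedType.Exports.
Local Open Scope ring_scope.

Set Implicit Arguments. Unset Strict Implicit.
Section H.
Variable R : realType.

Lemma is_derive_ext (f g : R -> R) x v df :
  (forall s, f s = g s) -> is_derive x v f df -> is_derive x v g df.
Proof. by move=> fg; rewrite (_ : f = g) //; apply: funext. Qed.

Lemma lin_derive (a b : R) : is_derive (0:R) 1 (fun s : R => a + s * b) b.
Proof.
have H := is_deriveD (is_derive_cst a (0:R) 1) (is_deriveM (is_derive_id (0:R) 1) (is_derive_cst b (0:R) 1)).
apply: is_derive_ext (is_derive_eq H _) => //=.
by rewrite scaler0 !add0r /GRing.scale /= mulr1.
Qed.

Lemma sig_derive (a b c : R) : is_derive (0:R) 1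
  (fun s : R => c * (a + s * b) + ln (1 + expR (- (a + s * b))))
  (b * (sigmoid a - (1 - c))).
Proof.
have hl : is_derive (0:R) 1 (fun s : R => 1 + expR (- (a + s * b)))
    (expR (- a) * (- b)).
  have H := is_deriveD (is_derive_cst (1:R) (0:R) 1)
   (@is_derive1_comp R expR (- (fun s : R => a + s * b)) 0 _ _ (is_derive_expR _) (is_deriveN (lin_derive a b))).
  apply: is_derive_ext (is_derive_eq H _) => //=.
  by rewrite add0r (_ : (- _) 0 = -(a + 0 * b)) // mul0r addr0.
have hpos : 0 < 1 + expR (- a) by rewrite addr_gt0 // expR_gt0.
have H := is_deriveD (is_deriveM (is_derive_cst c (0:R) 1) (lin_derive a b))
  (is_derive1_comp (is_derive1_ln _) hl).
apply: is_derive_ext (is_derive_eq (H _) _) => //=.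
  rewrite /sigmoid mul0r addr0 /GRing.scale /= mulr0 addr0.
  have hne : 1 + expR (- a) != 0 by rewrite gt_eqF.
  by field.
Qed.

Variables (D N : nat) (Phi : 'M[R]_(D, N)) (t : 'cV[R]_N).

Definition an (n : 'I_N) (x : 'cV[R]_D) : R := (x^T *m col n Phi) 0 0.

Lemma an_lin n x v s : an n (x + s *: v) = an n x + s * an n v.
Proof. by rewrite /an linearD linearZ /= mulmxDl -scalemxAl !mxE. Qed.

Lemma ln_sig (a : R) : ln (sigmoid a) = - ln (1 + expR (- a)).
Proof.
have hpos : 0 < 1 + expR (- a) by rewrite addr_gt0 // expR_gt0.
by rewrite /sigmoid div1r lnV // posrE.
Qed.

Lemma ln_1sig (a : R) : ln (1 - sigmoid a) = - a - ln (1 + expR (- a)).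
Proof.
have hpos : 0 < 1 + expR (- a) by rewrite addr_gt0 // expR_gt0.
have -> : 1 - sigmoid a = expR (- a) * (1 + expR (- a))^-1.
  rewrite /sigmoid; have hne : 1 + expR (- a) != 0 by rewrite gt_eqF.
  by field.
rewrite lnM ?posrE ?invr_gt0 ?expR_gt0 // expRK lnV ?posrE //.
Qed.

Lemma psi_eq th : Psi_data Phi t th =
  \sum_(n < N) ((1 - t n 0) * (an n th) + ln (1 + expR (- an n th))).
Proof.
rewrite /Psi_data -sumrN; apply: eq_bigr => n _.
rewrite /yvec mxE ln_sig ln_1sig /an.
ring.
Qed.

Lemma psi_derive x v : is_derive (0:R) 1 (fun s : R => Psi_data Phi t (x + s *: v))
   (\sum_(n < N) an n v * (sigmoid (R:=R) (an n x) - t n 0)).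
Proof.
have H := @is_derive_sum _ _ _ N (fun n (s : R) => (1 - t n 0) * (an n x + s * an n v) + ln (1 + expR (- (an n x + s * an n v)))) 0 1 _
   (fun n => sig_derive _ _ _).
apply: is_derive_ext (is_derive_eq H _).
  move=> s; rewrite fct_sumE psi_eq; apply: eq_bigr => n _.
  by rewrite an_lin.
by apply: eq_bigr => n _; rewrite subKr.
Qed.

Lemma an_scale n k v : an n (k *: v) = k * an n v.
Proof. by rewrite /an linearZ /= -scalemxAl !mxE. Qed.

Lemma an_delta n d : an n (delta_mx d 0) = Phi d n.
Proof. by rewrite /an trmx_delta -rowE !mxE. Qed.

End H.

Lemma sum_upd (V : nmodType) (M : nat) (f g : 'I_M -> V) (i : 'I_M) (x : V) :
  (forall j, g j = if j == i then x else f j) ->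
  \sum_(j < M) g j = x + \sum_(j < M | j != i) f j.
Proof.
move=> hg; rewrite (bigD1 i) // hg eqxx; congr (_ + _).
by apply: eq_bigr => j /negbTE hj; rewrite hg hj.
Qed.

Unset Implicit Arguments. Set Strict Implicit.

Theorem mainTheorem4 (R : realType) (D N M : nat) (hM : (2 <= M)%N)
  (Phi : 'M[R]_(D, N)) (t : 'cV[R]_N)
  (ht : forall n : 'I_N, t n 0 = 0 \/ t n 0 = 1)
  (ens : 'I_M -> 'cV[R]_D) (i : 'I_M) :
  (forall d : 'I_D,
     derivable (partial_fun (fun th => Psi_KBF Phi t (ens_upd ens i th)) (ens i) d) 0 1)
  /\ EnKBF_rhs Phi t ens i
     = - (ens_cov ens *m grad (fun th => Psi_KBF Phi t (ens_upd ens i th)) (ens i)).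
Proof.
set F := fun th => _.
have hMne : (M%:R : R) != 0 by rewrite pnatr_eq0 -lt0n; apply: leq_trans hM.
pose m := ens_mean ens.
pose dv (d : 'I_D) := 2^-1 * \sum_(n < N) an Phi n (delta_mx d 0) * (sigmoid (an Phi n (ens i)) - t n 0)
  + (M%:R / 2) * \sum_(n < N) an Phi n ((M%:R)^-1 *: delta_mx d 0) * (sigmoid (an Phi n m) - t n 0).
have E : forall x y : R, x *: y = x * y by [].
have Hd : forall d, is_derive (0:R) 1 (partial_fun F (ens i) d) (dv d).
  move=> d.
  pose C := 2^-1 * \sum_(j < M | j != i) Psi_data Phi t (ens j).
  have H := is_deriveD (is_deriveD (is_derive_cst C (0:R) 1)
     (is_deriveZ (2^-1) (psi_derive Phi t (ens i) (delta_mx d 0))))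
     (is_deriveZ (M%:R / 2) (psi_derive Phi t m ((M%:R)^-1 *: delta_mx d 0))).
  apply: is_derive_ext (is_derive_eq H _).
    move=> s /=.
    rewrite /partial_fun /F /Psi_KBF.
    rewrite !fctE /GRing.scale_fun.
    rewrite !E.
    have Hu : forall j, j != i -> ens_upd ens i (ens i + s *: delta_mx d 0) j = ens j.
      by move=> j /negbTE hj; rewrite /ens_upd hj.
    rewrite /C /m /ens_mean. 
    rewrite (@sum_upd _ _ (fun j => Psi_data Phi t (ens j)) _ i (Psi_data Phi t (ens i + s *: delta_mx d 0))); last first.
      by move=> j; rewrite /ens_upd; case: (j == i).
    rewrite (@sum_upd _ _ ens (ens_upd ens i (ens i + s *: delta_mx d 0)) i (ens i + s *: delta_mx d 0)); last first.
      by move=> j; rewrite /ens_upd; case: (j == i).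
    rewrite (@sum_upd _ _ ens ens i (ens i)); last first.
      by move=> j; case: eqP => // ->.
    set S := \sum_(j < M | j != i) ens j.
    set P := \sum_(j < M | j != i) Psi_data Phi t (ens j).
    have -> : M%:R^-1 *: (ens i + s *: delta_mx d 0 + S) = M%:R^-1 *: (ens i + S) + s *: (M%:R^-1 *: delta_mx d 0 : 'cV[R]_D).
      by rewrite addrAC scalerDr !scalerA [s * _]mulrC.
    by rewrite mulrDr [2^-1 * Psi_data _ _ _ + _]addrC.
  by rewrite add0r !E /dv.

split; first by move=> d; case: (Hd d).
have G : grad F (ens i) = 2^-1 *: (Phi *m (yvec Phi (ens i) + yvec Phi (ens_mean ens) - 2 *: t)).
  apply/matrixP => d j; rewrite ord1 !mxE derive1E (@derive_val _ _ _ _ _ _ _ (Hd d)) /dv.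
  have W : forall n, (yvec Phi (ens i) + yvec Phi (ens_mean ens) - 2 *: t) n 0 = sigmoid (an Phi n (ens i)) + sigmoid (an Phi n m) - 2 * t n 0.
    by move=> n; rewrite /yvec /an /m !mxE.
  rewrite !mulr_sumr -big_split; apply: eq_bigr => n _ /=.
  rewrite an_scale !an_delta W.
  by field.
by rewrite G /EnKBF_rhs -scalemxAr mulmxA scaleNr.
Qed.
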